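(* Let $\mathcal{Q}$ be a quantum query algorithm making $p(n)$ queries to an oracle acting on an $n$-qubit query register, and fix an initial state. For an $n$-qubit pure state $|\psi\rangle$, let $|\Phi^f_\psi\rangle$ be the final state (before measurement) of $\mathcal{Q}$ run from this initial state with oracle $U_\psi=\mathbb{1}-2|\psi\rangle\langle\psi|$. Then there exists a subspace $S$ of the $n$-qubit Hilbert space of dimension $2^{n/2}$ containing $|\psi\rangle$ such that, if $|\Phi^f_S\rangle$ is the final state of $\mathcal{Q}$ run from the same initial state with oracle $U_S=\mathbb{1}-2\Pi_S$ ($\Pi_S$ the orthogonal projector onto $S$), then $\big\||\Phi^f_\psi\rangle-|\Phi^f_S\rangle\big\|_2\le 2p(n)\cdot2^{-n/6}$.
   Context: A quantum query algorithm alternates fixed unitaries on its registers with applications of the oracle to a designated $n$-qubit query register (tensored with identity elsewhere). $n$ is assumed even. *)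

(* Defs.v *)
From HB Require Import structures.
From mathcomp Require Import all_boot all_order all_algebra.
From mathcomp Require Import reals.
From mathcomp.real_closed Require Import complex mxtens.
Set Implicit Arguments.
Unset Strict Implicit.
Unset Printing Implicit Defensive.
Import Order.TTheory GRing.Theory Num.Theory Num.Def.
Local Open Scope ring_scope.

(* Conventions: states are ROW vectors 'rV[C]_d; an operator M acts on a
   state v as  v *m M  (so the fixed unitaries range over all unitaries,
   transposition being irrelevant). *)

Definition l2norm (C : numClosedFieldType) d (v : 'rV[C]_d) : C :=
  sqrtC (\sum_i `|v 0 i| ^+ 2).

(* |psi><psi| in the row-vector convention: v *m rank1proj psi = <psi|v> psi. *)
Definition rank1proj (C : numClosedFieldType) d (psi : 'rV[C]_d) : 'M[C]_d :=
  (map_mx conjC psi^T) *m psi.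

Definition oracle_state (C : numClosedFieldType) d (psi : 'rV[C]_d) : 'M[C]_d :=
  1%:M - 2%:R *: rank1proj psi.

Definition oracle_subspace (C : numClosedFieldType) k d (S : 'M[C]_(k, d)) : 'M[C]_d :=
  1%:M - 2%:R *: proj_ortho S.

(* A quantum query algorithm on the space C^(2^n) (query register) (x) C^W
   (remaining registers), given by fixed unitaries U 0, U 1, ..., U q.                        *)
Fixpoint run_alg (C : numClosedFieldType) (N W : nat)
    (U : nat -> 'M[C]_(N * W)) (O : 'M[C]_N) (phi0 : 'rV[C]_(N * W)) (k : nat)
    : 'rV[C]_(N * W) :=
  match k with
  | 0 => phi0 *m U 0
  | k'.+1 => run_alg U O phi0 k' *m (O *t (1%:M : 'M[C]_W)) *m U k
  end.

Definition final_state (C : numClosedFieldType) (N W : nat)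
    (U : nat -> 'M[C]_(N * W)) (q : nat) (O : 'M[C]_N) (phi0 : 'rV[C]_(N * W))
    : 'rV[C]_(N * W) := run_alg U O phi0 q.

(* Main.v *)
Require Import Defs.
From HB Require Import structures.
From mathcomp Require Import all_boot all_order all_algebra.
From mathcomp Require Import reals.
From mathcomp.real_closed Require Import complex mxtens.
From mathcomp Require Import ring zify.
Import Order.TTheory GRing.Theory Num.Theory Num.Def.
Local Open Scope ring_scope.
Set Implicit Arguments.
Unset Strict Implicit.
Unset Printing Implicit Defensive.
Local Open Scope sesquilinear_scope.
Local Notation "''[' u ]" := (dotmx u u) : ring_scope.
Local Notation "B ^!" := (orthomx conjC (mx_of_hermitian (hermitian1mx _)) B) : matrix_set_scope.
Lemma l2normE (C : numClosedFieldType) d (v : 'rV[C]_d) : l2norm v = sqrtC '[v].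
Proof.
rewrite /l2norm dotmxE mxE; congr sqrtC; apply: eq_bigr => i _.
by rewrite !mxE normCK.
Qed.

Lemma dot_unitary (C : numClosedFieldType) m k (v : 'rV[C]_m) (M : 'M[C]_(m,k)) :
  M \is unitarymx -> '[v *m M] = '[v].
Proof.
move=> /unitarymxP HM; rewrite !dotmxE trmx_mul map_mxM mulmxA.
by rewrite -(mulmxA v) HM mulmx1.
Qed.

Lemma nrm_tri (C : numClosedFieldType) d (u v : 'rV[C]_d) :
  sqrtC '[u + v] <= sqrtC '[u] + sqrtC '[v].
Proof. exact: (triangle_lerif (@dotmx C d) u v).1. Qed.

Lemma tens1 (C : comPzRingType) a b :
  (1%:M : 'M[C]_a) *t (1%:M : 'M[C]_b) = 1%:M.
Proof.
apply/matrixP => i j.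
case: (mxtens_indexP i) => i1 i2; case: (mxtens_indexP j) => j1 j2.
rewrite tensmxE !mxE (inj_eq (can_inj (@mxtens_indexK _ _))) xpair_eqE.
by case: (i1 == j1); case: (i2 == j2); rewrite ?mulr1 ?mulr0 ?mul0r.
Qed.

Lemma tens_trC (C : numClosedFieldType) m n p q (A : 'M[C]_(m,n)) (B : 'M[C]_(p,q)) :
  (A *t B)^t* = A^t* *t B^t*.
Proof. by rewrite trmx_tens map_mxT. Qed.

Lemma tens_unitary (C : numClosedFieldType) m n w (A : 'M[C]_(m,n)) :
  A \is unitarymx -> A *t (1%:M : 'M[C]_w) \is unitarymx.
Proof.
move=> /unitarymxP HA; apply/unitarymxP.
by rewrite tens_trC tensmx_mul HA trmx1 map_mx1 mulmx1 tens1.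
Qed.

Lemma tensBl (C : comPzRingType) m n p q (A B : 'M[C]_(m,n)) (M : 'M[C]_(p,q)) :
  (A - B) *t M = A *t M - B *t M.
Proof. by apply/matrixP => i j; rewrite !mxE mulrBl. Qed.

Lemma tensZl (C : comPzRingType) m n p q c (A : 'M[C]_(m,n)) (M : 'M[C]_(p,q)) :
  (c *: A) *t M = c *: (A *t M).
Proof. by apply/matrixP => i j; rewrite !mxE mulrA. Qed.

Lemma tensMl (C : comPzRingType) m n k w (A : 'M[C]_(m,n)) (B : 'M[C]_(n,k)) :
  (A *m B) *t (1%:M : 'M[C]_w) = (A *t 1%:M) *m (B *t 1%:M).
Proof. by rewrite tensmx_mul mulmx1. Qed.

Lemma exQ (C : numClosedFieldType) N (psi : 'rV[C]_N) : '[psi] = 1 ->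
  exists Q : 'M[C]_N, Q \is unitarymx /\ exists i0, row i0 Q = psi.
Proof.
move=> hpsi.
have psi0 : psi != 0.
  by apply/eqP => h; move: hpsi; rewrite h dotmxE mul0mx mxE => /eqP; rewrite eq_sym oner_eq0.
set B := schmidt (row_base psi^!%MS).
have Bu : B \is unitarymx by apply: schmidt_unitarymx; exact: rank_leq_col.
have Bo : B *m psi^t* = 0.
  apply/orthomx1P.
  rewrite /B (eqmx_schmidt_free (row_base_free _)) eq_row_base.
  by rewrite orthomx_sym; exact: ortho_mx_ortho.
have e : (1 + \rank psi^!%MS = N)%N.
  by rewrite rank_ortho rank_rV psi0 /= subnKC // lt0n; case: N psi psi0 {hpsi B Bu Bo} => // v; rewrite thinmx0 eqxx.
have Mu : col_mx psi B \is unitarymx.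
  apply/unitarymxP; rewrite tr_col_mx map_row_mx mul_col_row (unitarymxP Bu) Bo.
  have -> : psi *m B^t* = 0.
    by rewrite -[psi *m _]trmxCK trmx_mul map_mxM !trmxCK Bo trmx0 map_mx0.
  have -> : psi *m psi^t* = 1%:M.
    by rewrite [LHS]mx11_scalar -dotmxE hpsi.
  by rewrite -scalar_mx_block.
have R0 : row (lshift (\rank psi^!%MS) (0 : 'I_1)) (col_mx psi B) = psi.
  by rewrite rowKu row_id.
move: (col_mx psi B) (lshift _ _) Mu R0; rewrite e => M i Mu R0.
by exists M; split => //; exists i.
Qed.

Definition ind (C : nzRingType) N (b : pred 'I_N) : 'rV[C]_N := \row_i (b i)%:R.

Lemma rank_diag_ind (F : fieldType) n (b : pred 'I_n) :
  \rank (diag_mx (ind F b)) = #|b|.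
Proof.
elim: n b => [|n IH] b.
  apply/eqP; rewrite eqn_leq (leq_trans (rank_leq_row _)) //=.
  by rewrite (leq_trans (max_card _)) // card_ord.
have -> : ind F b = row_mx (ind F (fun i : 'I_1 => b (lshift n i)))
                            (ind F (fun i => b (rshift 1 i))).
  apply/rowP => i; case: (@split_ordP 1 n i) => j ->.
    by rewrite !mxE -[lshift n j]/(unsplit (inl j)) unsplitK !mxE.
  by rewrite !mxE -[rshift 1 j]/(unsplit (inr j)) unsplitK !mxE.
set l := ind F _; set r := ind F _.
have -> : \rank (diag_mx (row_mx l r)) =
   \rank (block_mx (diag_mx l) 0 0 (diag_mx r) : 'M[F]_(1 + n)).
  by rewrite -diag_mx_row.
rewrite rank_diag_block_mx IH rank_rV.
rewrite -!sum1_card (big_mkcond (fun i => b i)) big_ord_recl /= -big_mkcond /=.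
congr (_ + _)%N.
  have Hl : diag_mx l 0 0 = (b ord0)%:R.
    by rewrite !mxE /= mulr1n; congr (b _)%:R; apply: val_inj.
  case: (b ord0) Hl => Hl.
    suff -> : diag_mx l != 0 by [].
    by apply/eqP => h; move: Hl; rewrite h mxE => /eqP; rewrite eq_sym oner_eq0.
  have -> : diag_mx l = 0 by apply/matrixP => i j; rewrite !ord1 Hl mxE.
  by rewrite eqxx.
apply: eq_bigl => i; congr b; exact: val_inj.
Qed.


Definition Pb (C : numClosedFieldType) N (Q : 'M[C]_N) (b : pred 'I_N) : 'M[C]_N :=
  Q^t* *m diag_mx (ind C b) *m Q.

Lemma diag_indC (C : numClosedFieldType) N (b : pred 'I_N) :
  (diag_mx (ind C b))^t* = diag_mx (ind C b).
Proof.
apply/matrixP => i j; rewrite !mxE eq_sym.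
by case: eqP => [->|_]; rewrite ?mulr1n ?mulr0n ?rmorph_nat ?rmorph0.
Qed.

Lemma diag_ind_idem (C : numClosedFieldType) N (b : pred 'I_N) :
  diag_mx (ind C b) *m diag_mx (ind C b) = diag_mx (ind C b).
Proof.
rewrite mulmx_diag; congr diag_mx; apply/rowP => i; rewrite !mxE.
by case: (b i); rewrite ?mulr1 ?mulr0.
Qed.

Lemma QtQ (C : numClosedFieldType) N (Q : 'M[C]_N) :
  Q \is unitarymx -> Q^t* *m Q = 1%:M.
Proof. by move=> HQ; rewrite -[Q^t*]mul1mx mulmxKtV. Qed.

Lemma Pb_herm (C : numClosedFieldType) N (Q : 'M[C]_N) b : (Pb Q b)^t* = Pb Q b.
Proof.
by rewrite /Pb !trmx_mul !map_mxM trmxCK diag_indC mulmxA.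
Qed.

Lemma Pb_idem (C : numClosedFieldType) N (Q : 'M[C]_N) b :
  Q \is unitarymx -> Pb Q b *m Pb Q b = Pb Q b.
Proof.
move=> HQ; rewrite /Pb !mulmxA -(mulmxA _ Q) (unitarymxP HQ) mulmx1.
by rewrite -(mulmxA _ (diag_mx _) (diag_mx _)) diag_ind_idem.
Qed.

Lemma refl_unitary (C : numClosedFieldType) N (P : 'M[C]_N) :
  P^t* = P -> P *m P = P -> 1%:M - 2%:R *: P \is unitarymx.
Proof.
move=> H HPP; apply/unitarymxP.
have HP i j : conjC (P j i) = P i j by rewrite -[in RHS]H !mxE.
have -> : (1%:M - 2%:R *: P)^t* = 1%:M - 2%:R *: P.
  apply/matrixP => i j; rewrite !mxE rmorphB rmorphM /= conjC_nat HP.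
  by rewrite rmorph_nat eq_sym.
rewrite mulmxBl !mulmxBr !mul1mx !mulmx1 -scalemxAl -scalemxAr HPP scalerA.
apply/matrixP => i j; rewrite !mxE; ring.
Qed.

Lemma rank1proj_Pb (C : numClosedFieldType) N (Q : 'M[C]_N) i0 :
  rank1proj (row i0 Q) = Pb Q (pred1 i0).
Proof.
rewrite /Pb /rank1proj rowE.
have -> : diag_mx (ind C (pred1 i0)) = delta_mx i0 (0 : 'I_1) *m delta_mx 0 i0.
  rewrite mul_delta_mx; apply/matrixP => i j; rewrite !mxE /=.
  by case: eqP => [->|]; case: eqP => //= [->|]; rewrite ?eqxx ?mulr1n // eq_sym => /eqP /negPf ->.
have -> : delta_mx i0 (0 : 'I_1) = (delta_mx (0 : 'I_1) i0)^t* :> 'M[C]_(N, 1).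
  by apply/matrixP => i j; rewrite !mxE andbC rmorph_nat.
by rewrite trmx_mul map_mxM !mulmxA.
Qed.

Definition Smx (C : numClosedFieldType) N (b : pred 'I_N) (Q : 'M[C]_N) : 'M[C]_N :=
  diag_mx (ind C b) *m Q.

Lemma proj_Pb (C : numClosedFieldType) N (Q : 'M[C]_N) b :
  Q \is unitarymx -> proj_ortho (Smx b Q) = Pb Q b.
Proof.
move=> HQ; rewrite /Smx; set S := diag_mx _ *m Q.
have H1 : (Pb Q b <= S)%MS by rewrite /Pb -mulmxA submxMl.
have H2 : (1%:M - Pb Q b) *m S^t* = 0.
  rewrite /S trmx_mul map_mxM diag_indC mulmxBl mul1mx /Pb.
  rewrite -!mulmxA (mulmxA Q) (unitarymxP HQ) mul1mx.
  by rewrite diag_ind_idem subrr.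
have H3 : (1%:M - Pb Q b <= S^!)%MS by apply/orthomx1P.
rewrite -[proj_ortho S]mul1mx -{1}(subrK (Pb Q b) 1%:M) mulmxDl.
rewrite (proj_ortho_id H1) (proj_ortho_0 H3) add0r.
by [].
Qed.

Lemma rank_S (C : numClosedFieldType) N (Q : 'M[C]_N) b :
  Q \is unitarymx -> \rank (Smx b Q) = #|b|.
Proof.
move=> HQ; rewrite /Smx; rewrite mxrankMfree ?rank_diag_ind //.
by rewrite /row_free mxrank_unitary.
Qed.

Lemma psi_sub_S (C : numClosedFieldType) N (Q : 'M[C]_N) (b : pred 'I_N) i0 :
  b i0 -> (row i0 Q <= Smx b Q)%MS.
Proof.
move=> bi0; rewrite /Smx; rewrite rowE.
have <- : (delta_mx 0 i0 : 'rV[C]_N) *m diag_mx (ind C b) = delta_mx 0 i0.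
  rewrite mul_mx_diag; apply/matrixP => i j; rewrite !mxE.
  by rewrite ord1 eqxx /=; case: eqP => [->|_]; rewrite ?bi0 ?mulr1 ?mul0r.
by rewrite -mulmxA submxMl.
Qed.



Lemma run_norm (C : numClosedFieldType) N W (U : nat -> 'M[C]_(N * W)) O phi0 p :
  (forall k, (k <= p)%N -> U k \is unitarymx) ->
  O *t (1%:M : 'M[C]_W) \is unitarymx ->
  forall t, (t <= p)%N -> '[run_alg U O phi0 t] = '[phi0].
Proof.
move=> HU HO; elim=> [|t IH] Ht /=; first by rewrite dot_unitary // HU.
by rewrite dot_unitary ?HU // dot_unitary // IH // ltnW.
Qed.

Lemma hybrid (C : numClosedFieldType) N W (U : nat -> 'M[C]_(N * W)) O1 O2 phi0 p :
  (forall k, (k <= p)%N -> U k \is unitarymx) ->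
  O2 *t (1%:M : 'M[C]_W) \is unitarymx ->
  forall t, (t <= p)%N ->
  sqrtC '[run_alg U O1 phi0 t - run_alg U O2 phi0 t] <=
  \sum_(s < t) sqrtC '[run_alg U O1 phi0 s *m ((O1 - O2) *t (1%:M : 'M[C]_W))].
Proof.
move=> HU HO; elim=> [|t IH] Ht /=.
  by rewrite subrr big_ord0 dotmxE mul0mx mxE sqrtC0.
set a := run_alg U O1 phi0 t; set b := run_alg U O2 phi0 t.
have -> : a *m (O1 *t 1%:M) *m U t.+1 - b *m (O2 *t 1%:M) *m U t.+1 =
   ((a - b) *m (O2 *t 1%:M) + a *m ((O1 - O2) *t 1%:M)) *m U t.+1.
  by rewrite tensBl mulmxBr mulmxDl !mulmxBl [RHS]addrC [RHS]addrA subrK.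
rewrite dot_unitary ?HU // big_ord_recr /=.
apply: le_trans (nrm_tri _ _) _; rewrite lerD2r dot_unitary //.
exact: IH (ltnW Ht).
Qed.

Definition wt (C : numClosedFieldType) N W (c : 'rV[C]_(N * W)) (i : 'I_N) : C :=
  \sum_(w < W) `|c 0 (mxtens_index (i, w))| ^+ 2.

Lemma dot_sum (C : numClosedFieldType) d (v : 'rV[C]_d) : '[v] = \sum_i `|v 0 i| ^+ 2.
Proof. by rewrite dotmxE mxE; apply: eq_bigr => i _; rewrite !mxE normCK. Qed.

Lemma sum_tens (C : numClosedFieldType) N W (F : 'I_(N * W) -> C) :
  \sum_k F k = \sum_(i < N) \sum_(w < W) F (mxtens_index (i, w)).
Proof.
rewrite pair_big /= (reindex (@mxtens_index N W)) /=; last first.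
  by exists (@mxtens_unindex N W) => x _; [rewrite mxtens_indexK | rewrite mxtens_unindexK].
by apply: eq_bigr => -[i w] _.
Qed.

Lemma dot_wt (C : numClosedFieldType) N W (c : 'rV[C]_(N * W)) :
  '[c] = \sum_i wt c i.
Proof. by rewrite dot_sum sum_tens. Qed.

Lemma wt_ge0 (C : numClosedFieldType) N W (c : 'rV[C]_(N * W)) i : 0 <= wt c i.
Proof. by apply: sumr_ge0 => w _; rewrite exprn_ge0. Qed.

Lemma diag_tens (C : numClosedFieldType) N W (b : pred 'I_N) :
  diag_mx (ind C b) *t (1%:M : 'M[C]_W) =
  diag_mx (\row_k (b (mxtens_unindex k).1)%:R).
Proof.
apply/matrixP => i j.
case: (mxtens_indexP i) => i1 i2; case: (mxtens_indexP j) => j1 j2.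
rewrite tensmxE !mxE (inj_eq (can_inj (@mxtens_indexK _ _))) xpair_eqE mxtens_indexK /=.
by case: (i1 == j1); case: (i2 == j2); rewrite ?mulr1 ?mulr0 ?mul0r ?mulr0n ?mulr1n.
Qed.

Lemma dot_wt_sel (C : numClosedFieldType) N W (c : 'rV[C]_(N * W)) (b : pred 'I_N) :
  '[c *m (diag_mx (ind C b) *t (1%:M : 'M[C]_W))] = \sum_(i < N | b i) wt c i.
Proof.
rewrite diag_tens mul_mx_diag dot_sum sum_tens [RHS]big_mkcond.
apply: eq_bigr => i _; rewrite /wt; case Hb: (b i).
  by apply: eq_bigr => w _; rewrite !mxE mxtens_indexK Hb mulr1.
by apply: big1 => w _; rewrite !mxE mxtens_indexK Hb mulr0 normr0 expr0n.
Qed.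

Lemma greedy (C : numDomainType) (I : finType) (f : I -> C) m :
  (forall i, 0 <= f i) -> forall A : {set I}, (m <= #|A|)%N ->
  exists J : {set I}, [/\ J \subset A, #|J| = m &
     #|A|%:R * \sum_(i in J) f i <= m%:R * \sum_(i in A) f i].
Proof.
move=> f0 A; move Hk: (#|A| - m)%N => k; elim: k A Hk => [|k IH] A Hk Hm.
  have eA : #|A| = m by apply/eqP; rewrite eqn_leq Hm andbT -subn_eq0 Hk.
  by exists A; split => //; rewrite eA.
have [x xA] : exists x, x \in A.
  by apply/set0Pn; rewrite -card_gt0; move: Hk; case: #|A| => //= ; rewrite sub0n.
have [z zA zmax] : exists2 z, z \in A & forall j, j \in A -> f j <= f z.
  case: (@real_arg_maxP _ _ x (mem A) f xA) => [i _|z zA zmax]; first exact: ger0_real.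
  by exists z.
set A' := A :\ z.
have cA : #|A| = #|A'|.+1 by rewrite (cardsD1 z A) zA.
have Hm' : (m <= #|A'|)%N.
  by move: Hk; rewrite cA; lia.
have Hk' : (#|A'| - m = k)%N by move: Hk; rewrite cA; lia.
have [J [JA' cJ HJ]] := IH A' Hk' Hm'.
exists J; split => //.
  by apply: subset_trans JA' _; apply: subsetDl.
rewrite (bigD1 z zA) /= cA -addn1 natrD mulrDl mul1r mulrDr.
have -> : \sum_(i in A | i != z) f i = \sum_(i in A') f i.
  by apply: eq_bigl => i; rewrite !inE andbC.
rewrite [X in _ <= X]addrC lerD //.
have -> : m%:R * f z = \sum_(i in J) f z by rewrite sumr_const cJ mulr_natl.
apply: ler_sum => i iJ; apply: zmax.
by move/subsetP: JA' => /(_ i iJ); rewrite inE => /andP[].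
Qed.
Lemma numC (C : numClosedFieldType) (y m p : nat) (x Y D : C) :
  (0 < y)%N -> m = (y - 1)%N ->
  0 < x -> x ^+ 3 = y%:R -> 0 <= Y -> 0 <= D -> D <= 2 ->
  D <= 2 * p%:R * sqrtC Y -> (m = 0%N -> Y = 0) ->
  ((y * y).-1)%:R * Y <= m%:R * p%:R ->
  D <= 2 * p%:R * x^-1.
Proof.
move=> y0 mE x0 x3 Y0 D0 D2 DY mY HY.
have xr : x \is Num.real by exact: gtr0_real.
have pr : (p%:R : C) \is Num.real by exact: realn.
have xi0 : 0 <= x^-1 by rewrite invr_ge0 ltW.
case: (real_leP xr pr) => [xp|px].
  apply: (le_trans D2).
  by rewrite -[X in X <= _]mulr1 -mulrA ler_pM2l ?ltr0n // ler_pdivlMr // mul1r.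
have [m0|m1] := eqVneq m 0%N.
  by move: DY; rewrite (mY m0) sqrtC0 mulr0 => /le_trans; apply; rewrite mulr_ge0 // mulr_ge0.
apply: (le_trans DY); apply: ler_wpM2l; first by rewrite mulr_ge0.
have mpos : (0 : C) < m%:R by rewrite ltr0n lt0n.
have H1 : (y.+1)%:R * Y <= p%:R.
  have e : ((y * y).-1 = m * y.+1)%N.
    rewrite mE; case: (y) y0 => // k _; rewrite subn1 /= !mulnS; lia.
  by move: HY; rewrite e natrM -mulrA ler_pM2l.
have H2 : x ^+ 3 * Y <= x.
  rewrite x3; apply: le_trans (ltW px); apply: le_trans H1.
  by apply: ler_wpM2r => //; rewrite ler_nat.
have H3 : Y <= x^-1 ^+ 2.
  have x2 : 0 < x ^+ 2 by rewrite exprn_gt0.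
  rewrite exprVn -(ler_pM2l x2) mulrV ?unitfE ?gt_eqF //.
  by rewrite -(ler_pM2l x0) mulr1 mulrA -exprS.
by rewrite -(sqrCK xi0) ler_sqrtC // nnegrE exprn_ge0.
Qed.

Lemma dotN (C : numClosedFieldType) d (v : 'rV[C]_d) : '[- v] = '[v].
Proof. by rewrite !dot_sum; apply: eq_bigr => i _; rewrite mxE normrN. Qed.

Lemma dotZ (C : numClosedFieldType) d (v : 'rV[C]_d) a : '[a *: v] = `|a| ^+ 2 * '[v].
Proof. exact: dnormZ. Qed.

Lemma Pb_sub (C : numClosedFieldType) N (Q : 'M[C]_N) (b b' b'' : pred 'I_N) :
  (forall i, (b i)%:R - (b' i)%:R = (b'' i)%:R :> C) ->
  Pb Q b - Pb Q b' = Pb Q b''.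
Proof.
move=> H; rewrite /Pb -mulmxBl -mulmxBr; congr (_ *m _ *m _).
apply/matrixP => i j; rewrite !mxE -H.
by case: eqP => _; rewrite ?mulr1n ?mulr0n ?subr0.
Qed.

Lemma gen (C : numClosedFieldType) (n W p : nat) (n_even : ~~ odd n)
    (U : nat -> 'M[C]_(2 ^ n * W))
    (U_unitary : forall k, (k <= p)%N -> U k \is unitarymx)
    (phi0 : 'rV[C]_(2 ^ n * W)) (phi0_state : l2norm phi0 = 1)
    (psi : 'rV[C]_(2 ^ n)) (psi_state : l2norm psi = 1) :
  exists S : 'M[C]_(2 ^ n),
    [/\ \rank S = (2 ^ n./2)%N,
        (psi <= S)%MS &
        l2norm (final_state U p (oracle_state psi) phi0
                - final_state U p (oracle_subspace S) phi0)
          <= 2%:R * p%:R * (6.-root (2%:R ^+ n))^-1 ].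
Proof.
have dn1 : forall d (v : 'rV[C]_d), l2norm v = 1 -> '[v] = 1.
  by move=> d v; rewrite l2normE => h; rewrite -(sqrtCK '[v]) h expr1n.
have hpsi := dn1 _ _ psi_state; have hphi := dn1 _ _ phi0_state.
have [Q [HQ [i0 Hrow]]] := exQ hpsi.
have HQt : Q^t* \is unitarymx by apply/unitarymxP; rewrite trmxCK QtQ.
set h := n./2.
have nE : n = (h + h)%N.
  by have := odd_double_half n; rewrite (negbTE n_even) add0n -addnn => e; rewrite /h e.
set m := (2 ^ h - 1)%N.
set O1 := oracle_state psi.
have O1E : O1 = 1%:M - 2%:R *: Pb Q (pred1 i0) by rewrite /O1 /oracle_state -Hrow rank1proj_Pb.
have O1u : O1 *t (1%:M : 'M_W) \is unitarymx.
  by apply: tens_unitary; rewrite O1E; apply: refl_unitary; [apply: Pb_herm|exact: Pb_idem HQ].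
pose a s := run_alg U O1 phi0 s.
pose c s := a s *m (Q^t* *t (1%:M : 'M_W)).
pose F i := \sum_(s < p) wt (c s) i.
have F0 : forall i, 0 <= F i by move=> i; apply: sumr_ge0 => s _; apply: wt_ge0.
have cnorm : forall s : 'I_p, '[c s] = 1.
  move=> s; rewrite /c dot_unitary; last exact: tens_unitary.
  rewrite /a (@run_norm _ _ _ U O1 phi0 p U_unitary O1u s (ltnW (ltn_ord s))).
  exact: hphi.
have mA : (m <= #|[set~ i0]|)%N.
  rewrite cardsC1 card_ord /m nE expnD; set y := (2 ^ h)%N.
  have : (0 < y)%N by rewrite expn_gt0.
  by nia.
have [J [JA cJ HJ]] := greedy F0 mA.
have i0J : i0 \notin J.
  by apply/negP => /(subsetP JA); rewrite !inE eqxx.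
pose b i := (i == i0) || (i \in J).
pose S := Smx b Q.
exists S; split.
- rewrite /S (rank_S b HQ) (@eq_card _ _ [predU1 i0 & J]) // cardU1 i0J cJ /m; have := expn_gt0 2 h; clearbody h; lia.
- rewrite -Hrow; apply: psi_sub_S; exact: predU1l.
set O2 := oracle_subspace S.
have O2E : O2 = 1%:M - 2%:R *: Pb Q b.
  by rewrite /O2 /oracle_subspace /S; have -> := proj_Pb b HQ.
have O2u : O2 *t (1%:M : 'M_W) \is unitarymx.
  by apply: tens_unitary; rewrite O2E; apply: refl_unitary; [exact: Pb_herm | exact: Pb_idem HQ].
have dO : O1 - O2 = 2%:R *: Pb Q (fun i => i \in J).
  rewrite O1E O2E opprB addrC addrA subrK -scalerBr (@Pb_sub _ _ Q b (pred1 i0) (fun i => i \in J)) // => i /=.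
  rewrite /b; case: eqP => [->|_] /=; first by rewrite (negbTE i0J) subrr.
  by rewrite subr0.
set Y := \sum_(i in J) F i.
have Y0 : 0 <= Y by apply: sumr_ge0.
have term : forall s : 'I_p, sqrtC '[a s *m ((O1 - O2) *t (1%:M : 'M_W))] <= 2 * sqrtC Y.
  move=> s; rewrite dO tensZl -scalemxAr dotZ /Pb !tensMl !mulmxA.
  rewrite (dot_unitary _ (tens_unitary _ HQ)) -/(c s) dot_wt_sel.
  rewrite sqrtCM ?nnegrE ?exprn_ge0 ?normr_ge0 ?sumr_ge0 //; last by move=> i _; apply: wt_ge0.
  rewrite sqrCK ?normr_ge0 // normr_nat; apply: ler_wpM2l => //.
  rewrite ler_sqrtC ?nnegrE ?sumr_ge0 //; last by move=> i _; apply: wt_ge0.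
  apply: ler_sum => i _; rewrite /F (bigD1 s) //= lerDl.
  by apply: sumr_ge0 => s' _; apply: wt_ge0.
rewrite l2normE /final_state -/O1 -/O2.
set D := sqrtC _.
have Hh := @hybrid _ _ _ U O1 O2 phi0 p U_unitary O2u p (leqnn p).
have DY : D <= 2 * p%:R * sqrtC Y.
  apply: le_trans Hh _; apply: le_trans (ler_sum _ (fun s _ => term s)) _.
  by rewrite sumr_const card_ord -[_ *+ p]mulr_natr mulrAC.
have D2 : D <= 2.
  apply: le_trans (nrm_tri _ _) _; rewrite dotN.
  rewrite (@run_norm _ _ _ U O1 phi0 p U_unitary O1u p (leqnn p)).
  rewrite (@run_norm _ _ _ U O2 phi0 p U_unitary O2u p (leqnn p)).
  by rewrite hphi sqrtC1.
have SF : \sum_(i in [set~ i0]) F i <= p%:R.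
  apply: (@le_trans _ _ (\sum_i F i)).
    rewrite [X in _ <= X](bigID (mem [set~ i0])) /= lerDl.
    by apply: sumr_ge0 => i _; apply: F0.
  rewrite /F exchange_big /=.
  under eq_bigr => s _ do rewrite -dot_wt cnorm.
  by rewrite sumr_const card_ord.
have HY : ((2 ^ n).-1)%:R * Y <= m%:R * p%:R.
  move: HJ; rewrite cardsC1 card_ord => HJ; apply: le_trans HJ _.
  by apply: ler_wpM2l => //; apply: ler0n.
have mY : m = 0%N -> Y = 0.
  move=> m0; move: cJ; rewrite m0 => /cards0_eq J0.
  by rewrite /Y J0 big_set0.
set x := 6.-root _.
have x0 : 0 < x by rewrite rootC_gt0 // exprn_gt0 // ltr0n.
have x3 : x ^+ 3 = (2 ^ h)%:R.
  apply/eqP; rewrite -(@eqrXn2 _ 2) //; last by rewrite exprn_ge0 // ltW.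
  rewrite -exprM /= rootCK // natrX -exprM nE addnn -muln2.
  done.
have D0 : 0 <= D by rewrite /D sqrtC_ge0 dot_sum; apply: sumr_ge0 => i _; apply: exprn_ge0.
apply: (@numC _ (2 ^ h) m p x Y D (expn_gt0 2 h) erefl x0 x3 Y0 D0 D2 DY mY).
by rewrite -expnD -nE.
Qed.

Unset Implicit Arguments.

Theorem mainTheorem4 (R : realType) (n W p : nat) (n_even : ~~ odd n)
    (U : nat -> 'M[R[i]]_(2 ^ n * W))
    (U_unitary : forall k, (k <= p)%N -> U k \is unitarymx)
    (phi0 : 'rV[R[i]]_(2 ^ n * W)) (phi0_state : l2norm phi0 = 1)
    (psi : 'rV[R[i]]_(2 ^ n)) (psi_state : l2norm psi = 1) :
  exists S : 'M[R[i]]_(2 ^ n),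
    [/\ \rank S = (2 ^ n./2)%N,
        (psi <= S)%MS &
        l2norm (final_state U p (oracle_state psi) phi0
                - final_state U p (oracle_subspace S) phi0)
          <= 2%:R * p%:R * (6.-root (2%:R ^+ n))^-1 ].
Proof. exact: (gen n_even U_unitary phi0_state psi_state). Qed.
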